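(* Let $H$ be a hexagonal system with a perfect matching. The edges of $H$ fall into three classes of mutually parallel edges (the three edge directions of the hexagonal lattice); let $S$ be one of these classes of minimum cardinality. Then $cf(H)\le |S|$.
   Context: A hexagonal system (HS) is a finite 2-connected plane graph in which every interior face is a regular hexagon of the hexagonal lattice. For a graph $G$ with a perfect matching and a perfect matching $M$ of $G$, a forcing set of $M$ is a subset of $M$ contained in no other perfect matching of $G$. A complete forcing set of $G$ is a set $S\subseteq E(G)$ such that $S\cap M$ is a forcing set of $M$ for every perfect matching $M$ of $G$; $cf(G)$ is the minimum cardinality of a complete forcing set of $G$. *)

(* Defs.v *)
From HB Require Import structures.
From mathcomp Require Import all_boot all_order all_algebra.
From mathcomp Require Import finmap.
Set Implicit Arguments. Unset Strict Implicit. Unset Printing Implicit Defensive.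
Local Open Scope fset_scope.

(* The hexagonal (honeycomb) lattice, in the standard "brick wall" model. *)
(* Vertices are the points (x,y) of Z^2.  Edges:                           *)
(*   ((x,y), false) : the "horizontal" edge  (x,y) -- (x+1,y)  (all x,y)   *)
(*   ((x,y), true ) : the "vertical" edge    (x,y) -- (x,y+1)  (x+y even)  *)
(* This graph is (plane-)isomorphic to the honeycomb lattice; its faces    *)
(* (the hexagons) are the bricks with lower-left corner (x,y), x+y even.   *)
(* The three classes of parallel edges of the honeycomb correspond to:     *)
(* vertical edges, horizontal edges with x+y even, horizontal edges with   *)
(* x+y odd.                                                                *)

Definition vertex := (int * int)%type.
Definition edge := (vertex * bool)%type.
Definition cell := (int * int)%type.

Definition evenZ (z : int) : bool := ~~ odd `|z|%N.

Definition lattice_edge (e : edge) : bool :=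
  if e.2 then evenZ (e.1.1 + e.1.2)%R else true.

Definition end1 (e : edge) : vertex := e.1.
Definition end2 (e : edge) : vertex :=
  if e.2 then (e.1.1, e.1.2 + 1)%R else (e.1.1 + 1, e.1.2)%R.

Definition incident (v : vertex) (e : edge) : bool :=
  (end1 e == v) || (end2 e == v).

Definition dir (e : edge) : 'I_3 :=
  if e.2 then inord 0
  else if evenZ (e.1.1 + e.1.2)%R then inord 1 else inord 2.

Definition valid_cell (c : cell) : bool := evenZ (c.1 + c.2)%R.

Definition cell_edges (c : cell) : seq edge :=
  let x := c.1 in let y := c.2 in
  [:: ((x, y), false); ((x + 1, y)%R, false);
      ((x, y + 1)%R, false); ((x + 1, y + 1)%R, false);
      ((x, y), true); ((x + 2, y)%R, true)].

Definition cell_adj : rel cell := fun c d =>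
  valid_cell c && valid_cell d &&
  ((d == (c.1 + 2, c.2)%R) || (d == (c.1 - 2, c.2)%R) ||
   (d == (c.1 + 1, c.2 + 1)%R) || (d == (c.1 - 1, c.2 + 1)%R) ||
   (d == (c.1 + 1, c.2 - 1)%R) || (d == (c.1 - 1, c.2 - 1)%R)).

Definition HEdges (C : {fset cell}) : {fset edge} :=
  [fset e | c in C, e in cell_edges c].

Definition HVerts (C : {fset cell}) : {fset vertex} :=
  [fset end1 e | e in HEdges C] `|` [fset end2 e | e in HEdges C].

Definition adj (E : {fset edge}) : rel vertex := fun u w =>
  has (fun e => ((end1 e == u) && (end2 e == w)) ||
                ((end1 e == w) && (end2 e == u))) (E : seq edge).

Definition two_connected (V : {fset vertex}) (E : {fset edge}) : Prop :=
  2 < #|` V| /\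
  forall (z u w : vertex), u \in V -> w \in V -> u != z -> w != z ->
    exists p : seq vertex,
      [/\ path (adj E) u p, last u p = w, z \notin p & all (mem V) p].

(* A hexagonal system, given by its finite nonempty set C of hexagons:
   its graph is the union of the boundaries of the hexagons of C; this
   graph is 2-connected, and its interior faces are exactly the hexagons of
   C, i.e. the lattice hexagons not in C form a single connected region
   (the unbounded face); there are no holes. *)
Definition hexagonal_system (C : {fset cell}) : Prop :=
  [/\ C != fset0,
      {in C, forall c, valid_cell c},
      two_connected (HVerts C) (HEdges C) &
      forall c d : cell, valid_cell c -> valid_cell d -> c \notin C -> d \notin C ->
        exists p : seq cell, [/\ path cell_adj c p, last c p = d &
                                 all (fun x => x \notin C) p]].

Definition perfect_matching (V : {fset vertex}) (E : {fset edge})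
  (M : {fset edge}) : Prop :=
  M `<=` E /\ forall v, v \in V -> #|` [fset e in M | incident v e] | = 1%N.

Definition forcing_set (V : {fset vertex}) (E : {fset edge})
  (M F : {fset edge}) : Prop :=
  F `<=` M /\ forall M', perfect_matching V E M' -> F `<=` M' -> M' = M.

Definition complete_forcing_set (V : {fset vertex}) (E : {fset edge})
  (S : {fset edge}) : Prop :=
  S `<=` E /\
  forall M, perfect_matching V E M -> forcing_set V E M (S `&` M).

Definition cf_le (V : {fset vertex}) (E : {fset edge}) (k : nat) : Prop :=
  exists S, complete_forcing_set V E S /\ (#|` S| <= k)%N.

Definition edge_class (E : {fset edge}) (d : 'I_3) : {fset edge} :=
  [fset e in E | dir e == d].

(* Main.v *)
Require Import Defs.
From HB Require Import structures.
From mathcomp Require Import all_boot all_order all_algebra.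
From mathcomp Require Import finmap zify.
Import GRing.Theory Num.Theory.
Local Open Scope fset_scope.
Local Open Scope ring_scope.

Lemma evenZE (z : int) : evenZ z = (z %% 2 == 0)%Z.
Proof. rewrite /evenZ -dvdn2 -(dvdzE 2 z). lia. Qed.

Definition par (v : vertex) : bool := evenZ (v.1 + v.2).

Definition hf (d : nat) (v : vertex) : int :=
  match d with
  | 0%N => v.2
  | 1%N => v.1 - v.2 + (if par v then 0 else 1)
  | _ => - (v.1 + v.2) + (if par v then 0 else 1)
  end.
Definition pf (d : nat) (v : vertex) : int :=
  match d with 0%N => v.1 | 1%N => v.1 + v.2 | _ => v.2 - v.1 end.
Definition qf (d : nat) (e : edge) : int :=
  match d with 0%N => e.1.1 | 1%N => e.1.1 + e.1.2
  | _ => if e.2 then e.1.2 - e.1.1 else e.1.2 - e.1.1 - 1 end.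
Definition dirn (e : edge) : nat :=
  if e.2 then 0%N else if evenZ (e.1.1 + e.1.2) then 1%N else 2%N.

Lemma dirE e : val (dir e) = dirn e.
Proof. rewrite /dir /dirn; case: e.2; first exact: (@inordK 2 0). case: evenZ; [exact: (@inordK 2 1)|exact: (@inordK 2 2)]. Qed.

Ltac splitifs := repeat match goal with
 | |- context[if ?c then _ else _] => let E := fresh "E" in case E: c
 | H : context[if ?c then _ else _] |- _ => let E := fresh "E" in case E: c in H
 end.

Ltac crush := rewrite /hf /pf /qf /dirn /end1 /end2 /lattice_edge /= /par /= ?evenZE;
  move=> *; splitifs; try lia.

Lemma propP e : par (end1 e) != par (end2 e).
Proof. case: e => [[x y] []]; rewrite /par /end1 /end2 /= !evenZE; lia. Qed.

Lemma propA d e : (d < 3)%N -> lattice_edge e -> dirn e != d -> hf d (end1 e) = hf d (end2 e).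
Proof.
case: e => [[x y] b]; case: d => [|[|[|d]]] // _; case: b; crush.
Qed.

Lemma propB d e : (d < 3)%N -> lattice_edge e -> dirn e = d ->
  if par (end1 e) then hf d (end1 e) < hf d (end2 e) else hf d (end2 e) < hf d (end1 e).
Proof.
case: e => [[x y] b]; case: d => [|[|[|d]]] // _; case: b; crush.
Qed.

Lemma propC d e : (d < 3)%N -> lattice_edge e -> dirn e != d ->
  (pf d (end1 e) = qf d e /\ pf d (end2 e) = qf d e + 1) \/
  (pf d (end2 e) = qf d e /\ pf d (end1 e) = qf d e + 1).
Proof.
case: e => [[x y] b]; case: d => [|[|[|d]]] // _; case: b; crush.
Qed.

Lemma propD d e e' : (d < 3)%N -> lattice_edge e -> lattice_edge e' -> dirn e != d -> dirn e' != d ->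
  hf d (end1 e) = hf d (end1 e') -> qf d e = qf d e' -> e = e'.
Proof.
case: e => [[x y] b]; case: e' => [[x' y'] b']; case: d => [|[|[|d]]] // _;
  case: b; case: b'; crush; f_equal; f_equal; lia.
Qed.

Definition sg (v : vertex) : int := if par v then -1 else 1.
Definition Dw (w : vertex -> int) (e : edge) : int :=
  sg (end1 e) * w (end1 e) + sg (end2 e) * w (end2 e).

Lemma end12 e : end1 e != end2 e.
Proof.
case: e => [[x y] []]; rewrite /end1 /end2 /=; apply/negP => /eqP [].
- lia.
- lia.
Qed.

Lemma pm_sum V E M w : perfect_matching V E M ->
  (forall e, e \in E -> (end1 e \in V) && (end2 e \in V)) ->
  \sum_(e <- M) Dw w e = \sum_(v <- V) sg v * w v.
Proof.
move=> [ME pmV] EV.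
transitivity (\sum_(v <- V) \sum_(e <- M | incident v e) sg v * w v); last first.
  apply: eq_fbigr => v vV _.
  have /cardfs1P [e0 He0] : #|` [fset e in M | incident v e]| == 1%N by rewrite pmV.
  by rewrite big_fset_condE He0 big_seq_fset1.
rewrite (eq_bigr (fun v => \sum_(e <- M) if incident v e then sg v * w v else 0));
  last by move=> v _; rewrite big_mkcond.
rewrite exchange_big /=.
apply: eq_fbigr => e eM _.
rewrite -big_mkcond big_fset_condE.
have -> : [fset v in V | incident v e] = end1 e |` [fset end2 e].
  apply/fsetP => v; rewrite !inE /incident.
  have /andP [h1 h2] := EV e (fsubsetP ME e eM).
  rewrite [end1 e == v]eq_sym [end2 e == v]eq_sym.
  case: (v =P end1 e) => [->|_] /=; first by rewrite h1.
  by case: (v =P end2 e) => [->|_]; rewrite ?h2 ?andbF.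
rewrite big_fsetU1 ?big_seq_fset1 //.
by rewrite inE end12.
Qed.

Lemma DwE w e : Dw w e = if par (end1 e) then w (end2 e) - w (end1 e) else w (end1 e) - w (end2 e).
Proof. have := propP e; rewrite /Dw /sg; case: (par (end1 e)); case: (par (end2 e)) => //= _; lia. Qed.

Lemma key V E M M' w : perfect_matching V E M -> perfect_matching V E M' ->
  (forall e, e \in E -> (end1 e \in V) && (end2 e \in V)) ->
  \sum_(e <- M `|` M') ((if e \in M then Dw w e else 0) - (if e \in M' then Dw w e else 0)) = 0.
Proof.
move=> pM pM' EV.
rewrite sumrB.
have H (N : {fset edge}) : N `<=` M `|` M' -> perfect_matching V E N ->
   \sum_(e <- M `|` M') (if e \in N then Dw w e else 0) = \sum_(v <- V) sg v * w v.
  move=> sub pN; rewrite -(@pm_sum _ _ _ w pN EV).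
  rewrite -(@big_fset_incl _ _ _ _ N); last 2 first.
  - exact: sub.
  - by move=> x _ /negbTE ->.
  by apply: eq_fbigr => x -> _.
rewrite H ?fsubsetUl // H ?fsubsetUr //.
by rewrite subrr.
Qed.

Arguments propA {d e}.
Arguments propB {d e}.
Arguments propC {d e}.
Arguments propD {d e e'}.

Lemma gen (V : {fset vertex}) (E M M' : {fset edge}) (d : nat) : (d < 3)%N ->
  (forall e, e \in E -> (end1 e \in V) && (end2 e \in V)) ->
  (forall e, e \in E -> lattice_edge e) ->
  perfect_matching V E M -> perfect_matching V E M' ->
  (forall e, e \in M -> dirn e = d -> e \in M') -> M' = M.
Proof.
move=> d3 EV Elat pM pM' hyp.
have ME := pM.1; have M'E := pM'.1.
have lat e : e \in M `|` M' -> lattice_edge e.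
  rewrite inE => /orP [eM|eM']; apply: Elat; [exact: (fsubsetP ME)|exact: (fsubsetP M'E)].
pose T w e := (if e \in M then Dw w e else 0) - (if e \in M' then Dw w e else 0).
have S1 : forall e0, e0 \in M' -> dirn e0 = d -> e0 \in M.
  move=> e0 e0M' de0.
  pose k := if par (end1 e0) then hf d (end2 e0) else hf d (end1 e0).
  pose w v : int := if k <= hf d v then 1 else 0.
  have K := @key _ _ _ _ w pM pM' EV.
  have Hd e : e \in M `|` M' -> dirn e != d -> Dw w e = 0.
    move=> eU nd; rewrite DwE /w (propA d3 (lat e eU) nd).
    by case: ifP; rewrite subrr.
  have Hp e : e \in M `|` M' -> 0 <= Dw w e.
    move=> eU; case: (eqVneq (dirn e) d) => [de|nd]; last by rewrite Hd.
    have := propB d3 (lat e eU) de; rewrite DwE /w.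
    move=> *; splitifs; lia.
  have T0 e : e \in M `|` M' -> 0 <= - T w e.
    move=> eU; rewrite /T; case eM: (e \in M); case eM': (e \in M').
    - by rewrite subrr.
    - case: (eqVneq (dirn e) d) => [de|nd]; first by rewrite (hyp e eM de) in eM'.
      by rewrite Hd // subr0 oppr0.
    - by rewrite sub0r opprK; apply: Hp.
    - by rewrite subrr oppr0.
  have e0U : e0 \in M `|` M' by rewrite inE e0M' orbT.
  move: K; rewrite big_seq => /eqP; rewrite -oppr_eq0 -sumrN.
  rewrite psumr_eq0; last by move=> i iU; apply: T0.
  move/allP => /(_ e0 e0U); rewrite e0U /= /T e0M'.
  case: ifP => // _; rewrite sub0r opprK.
  have := propB d3 (lat e0 e0U) de0; rewrite DwE /w /k.
  move=> *; splitifs; lia.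
have S2 : forall e0, e0 \in M `|` M' -> dirn e0 != d -> (e0 \in M) = (e0 \in M').
  move=> e0 e0U de0.
  pose m := hf d (end1 e0).
  pose k := qf d e0 + 1.
  pose w v : int := if (hf d v == m) && (k <= pf d v) then 1 else 0.
  have K := @key _ _ _ _ w pM pM' EV.
  rewrite (big_fsetD1 _ e0U) /= big1_fset ?addr0 in K; last first.
    move=> e /fsetD1P [ne eU] _.
    case: (eqVneq (dirn e) d) => [de|nd].
      case eM: (e \in M); case eM': (e \in M').
      - by rewrite subrr.
      - by rewrite (hyp e eM de) in eM'.
      - by rewrite (S1 e eM' de) in eM.
      - by rewrite subrr.
    suff -> : Dw w e = 0 by case: ifP; case: ifP; rewrite ?subrr.
    have hA := propA d3 (lat e eU) nd.
    have hC := propC d3 (lat e eU) nd.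
    have hD := propD d3 (lat e eU) (lat e0 e0U) nd de0.
    rewrite DwE /w -hA.
    case: (eqVneq (hf d (end1 e)) m) => [he|hne]; last first.
      by rewrite /=; case: ifP; rewrite subrr.
    have qne : qf d e != qf d e0.
      by apply/eqP => qe; move: ne; rewrite (hD he qe) eqxx.
    rewrite /=.
    move: qne hC; rewrite /k; move=> *; splitifs; lia.
  have hC0 := propC d3 (lat e0 e0U) de0.
  have hA0 := propA d3 (lat e0 e0U) de0.
  have Dne : Dw w e0 != 0.
    rewrite DwE /w -hA0 /m eqxx /= /k.
    move: hC0 => *; splitifs; lia.
  move: K; case: ifP; case: ifP => //.
  - by move=> _ _ /eqP; rewrite subr0 (negbTE Dne).
  - by move=> _ _ /eqP; rewrite sub0r oppr_eq0 (negbTE Dne).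
apply/fsetP => e.
case eU: (e \in M `|` M'); last first.
  by move: eU; rewrite inE => /negbT; rewrite negb_or => /andP [/negbTE -> /negbTE ->].
case: (eqVneq (dirn e) d) => [de|nd]; last by rewrite (S2 e eU nd).
case eM: (e \in M); first by rewrite (hyp e eM de).
by apply/negbTE/negP => eM'; rewrite (S1 e eM' de) in eM.
Qed.

Lemma HEV C e : e \in HEdges C -> (end1 e \in HVerts C) && (end2 e \in HVerts C).
Proof.
move=> eE; rewrite /HVerts !in_fsetU; apply/andP; split; apply/orP; [left|right];
  exact: in_imfset.
Qed.

Lemma Hlat C e : {in C, forall c, valid_cell c} -> e \in HEdges C -> lattice_edge e.
Proof.
move=> val /imfset2P [c cC [e' e'c ->]].
have := val c cC; rewrite /valid_cell.
case: c {cC} e'c => x y /=; rewrite !inE.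
move=> H; rewrite /lattice_edge.
repeat (case/orP: H => [/eqP -> | H]); rewrite /= ?evenZE //; move: H; try (move/eqP ->);
  rewrite /= ?evenZE; lia.
Qed.

Local Close Scope ring_scope.

Theorem mainTheorem4 (C : {fset cell}) (d : 'I_3) :
  hexagonal_system C ->
  (exists M, perfect_matching (HVerts C) (HEdges C) M) ->
  (forall d' : 'I_3, #|` edge_class (HEdges C) d| <= #|` edge_class (HEdges C) d'|)%N ->
  cf_le (HVerts C) (HEdges C) #|` edge_class (HEdges C) d|.
Proof.
move=> [_ vC _ _] _ _.
exists (edge_class (HEdges C) d); split => //.
split.
  by apply/fsubsetP => e; rewrite /edge_class inE => /andP [].
move=> M pM; split; first exact: fsubsetIr.
move=> M' pM' sub.
have := @gen (HVerts C) (HEdges C) M M' (val d) (ltn_ord d) (@HEV C).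
move=> /(_ (fun e => @Hlat C e vC) pM pM'); apply.
move=> e eM de; apply: (fsubsetP sub).
  rewrite in_fsetI eM andbT /edge_class !inE /=.
  apply/andP; split; first exact: (fsubsetP pM.1 e eM).
  by apply/eqP/val_inj; rewrite /= dirE.
Qed.
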